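(* For every finite set of ground terms $\Gamma$ and ground term $M$, the judgment $\Gamma\vdash M$ is provable in the natural deduction system $\mathcal N$ under theory $E$ if and only if the sequent $\downarrow\Gamma\vdash\downarrow M$ is provable in the sequent system $\mathcal D$.
   Context: Fix names, variables and constructors $\mathsf{pub}$ (unary), $\mathsf{sign},\mathsf{blind},\langle\cdot,\cdot\rangle,\{\cdot\}_\cdot$ (binary). Let $E$ be the union of AC-convergent equational theories $E_1,\dots,E_n$ with pairwise disjoint signatures $\Sigma_{E_i}$, disjoint from the constructors, each containing at most one associative-commutative (AC) binary symbol $\oplus_i$; $E$ is presented by a rewrite system $R_E$ terminating and confluent modulo AC; $\Sigma_E=\bigcup_i\Sigma_{E_i}$. Terms: names, variables, $\mathsf{pub}(M)$, $\mathsf{sign}(M,N)$, $\mathsf{blind}(M,N)$, $\langle M,N\rangle$, $\{M\}_N$, $g(M_1,\dots,M_j)$, $g\in\Sigma_E$. $\equiv$: equality modulo AC of all $\oplus_i$; $\approx_E$: equality modulo $E$; $\downarrow M$: $R_E$-normal form modulo AC; $\downarrow\Gamma$ elementwise. Guarded term: name, variable, or headed by a constructor. $E_i$-context: term with holes built only from symbols of $\Sigma_{E_i}$. A subterm occurrence $N$ of $M$ is a cross-theory subterm if headed by a symbol of some $\Sigma_{E_i}$ and it is an immediate argument of a subterm of $M$ headed by a symbol of $\Sigma_{E_j}$, $j\ne i$. $\Gamma,M$ means $\Gamma\cup\{M\}$. System $\mathcal N$: ($id$) $\Gamma\vdash M$ if $M\in\Gamma$; ($e_E$) from $\Gamma\vdash\{M\}_K$,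 $\Gamma\vdash K$ infer $\Gamma\vdash M$; ($e_I$) from $\Gamma\vdash M$, $\Gamma\vdash K$ infer $\Gamma\vdash\{M\}_K$; ($p_E$) from $\Gamma\vdash\langle M,N\rangle$ infer $\Gamma\vdash M$ and also $\Gamma\vdash N$; ($p_I$) from $\Gamma\vdash M,\Gamma\vdash N$ infer $\Gamma\vdash\langle M,N\rangle$; ($\mathsf{sign}_E$) from $\Gamma\vdash\mathsf{sign}(M,K)$, $\Gamma\vdash\mathsf{pub}(K)$ infer $\Gamma\vdash M$; ($\mathsf{sign}_I$) from $\Gamma\vdash M,\Gamma\vdash K$ infer $\Gamma\vdash\mathsf{sign}(M,K)$; ($\mathsf{blind}_{E1}$) from $\Gamma\vdash\mathsf{blind}(M,K)$, $\Gamma\vdash K$ infer $\Gamma\vdash M$; ($\mathsf{blind}_I$) from $\Gamma\vdash M,\Gamma\vdash K$ infer $\Gamma\vdash\mathsf{blind}(M,K)$; ($\mathsf{blind}_{E2}$) from $\Gamma\vdash\mathsf{sign}(\mathsf{blind}(M,R),K)$, $\Gamma\vdash R$ infer $\Gamma\vdash\mathsf{sign}(M,K)$; ($g_I$, $g\in\Sigma_E$) from $\Gamma\vdash M_1,\dots,\Gamma\vdash M_j$ infer $\Gamma\vdash g(M_1,\dots,M_j)$; ($\approx$) from $\Gamma\vdash N$ infer $\Gamma\vdash M$ if $M\approx_E N$. System $\mathcal D$ (sequents with all terms in normal form): ($id_{E_i}$, each $i$) $\Gamma\vdash M$ with no premise if $M\approx_E C[M_1,\dots,M_k]$ for an $E_i$-context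 $C$ and $M_l\in\Gamma$; (cut) from $\Gamma\vdash M$, $\Gamma,M\vdash T$ infer $\Gamma\vdash T$; ($p_L$) from $\Gamma,\langle M,N\rangle,M,N\vdash T$ infer $\Gamma,\langle M,N\rangle\vdash T$; ($p_R$) from $\Gamma\vdash M,\Gamma\vdash N$ infer $\Gamma\vdash\langle M,N\rangle$; ($e_L$) from $\Gamma,\{M\}_K\vdash K$ and $\Gamma,\{M\}_K,M,K\vdash N$ infer $\Gamma,\{M\}_K\vdash N$; ($e_R$) from $\Gamma\vdash M,\Gamma\vdash K$ infer $\Gamma\vdash\{M\}_K$; ($\mathsf{sign}_L$) from $\Gamma,\mathsf{sign}(M,K),\mathsf{pub}(L),M\vdash N$ infer $\Gamma,\mathsf{sign}(M,K),\mathsf{pub}(L)\vdash N$ if $K\equiv L$; ($\mathsf{sign}_R$) from $\Gamma\vdash M,\Gamma\vdash K$ infer $\Gamma\vdash\mathsf{sign}(M,K)$; ($\mathsf{blind}_{L1}$) from $\Gamma,\mathsf{blind}(M,K)\vdash K$ and $\Gamma,\mathsf{blind}(M,K),M,K\vdash N$ infer $\Gamma,\mathsf{blind}(M,K)\vdash N$; ($\mathsf{blind}_R$) from $\Gamma\vdash M,\Gamma\vdash K$ infer $\Gamma\vdash\mathsf{blind}(M,K)$; ($\mathsf{blind}_{L2}$) from $\Gamma,\mathsf{sign}(\mathsf{blind}(M,R),K)\vdash R$ and $\Gamma,\mathsf{sign}(\mathsf{blind}(M,R),K),\mathsf{sign}(M,K),R\vdash N$ infer $\Gamma,\mathsf{sign}(\mathsf{blind}(M,R),K)\vdash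 N$; ($gs$) from $\Gamma\vdash A$, $\Gamma,A\vdash M$ infer $\Gamma\vdash M$ if $A$ is a guarded subterm of a term in $\Gamma\cup\{M\}$; ($cs$) from $\Gamma\vdash N$, $\Gamma,N\vdash M$ infer $\Gamma\vdash M$ if $N$ is a cross-theory subterm of a term in $\Gamma\cup\{M\}$. *)

(* Defs.v *)
From Stdlib Require Import List Relations.
Import ListNotations.
Set Implicit Arguments.

(* Terms over a signature F of equational-theory symbols (Sigma_E). *)
Inductive term (F : Type) : Type :=
| Name  (n : nat)
| Var   (x : nat)
| Pub   (t : term F)
| Sign  (m k : term F)
| Blind (m k : term F)
| Pair  (m n : term F)
| Enc   (m k : term F)
| Fn    (f : F) (l : list (term F)).

Arguments Name {F}. Arguments Var {F}.

Section Theory.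
Variable F : Type.
Variable ar : F -> nat.
Variable ti : F -> nat.     (* index i of the theory E_i owning the symbol *)
Variable ac : F -> bool.    (* is the symbol the AC symbol (+)_i of its theory *)
Variable R : list (term F * term F).

Notation term := (term F).

Definition args_of (t : term) : list term :=
  match t with
  | Name _ | Var _ => []
  | Pub a => [a]
  | Sign a b | Blind a b | Pair a b | Enc a b => [a; b]
  | Fn _ l => l
  end.

Definition subterm : term -> term -> Prop :=
  clos_refl_trans term (fun a b => In a (args_of b)).

Definition ground (t : term) : Prop := forall x, ~ subterm (Var x) t.

Inductive wf : term -> Prop :=
| wf_name n : wf (Name n)
| wf_var x : wf (Var x)
| wf_pub a : wf a -> wf (Pub a)
| wf_sign a b : wf a -> wf b -> wf (Sign a b)
| wf_blind a b : wf a -> wf b -> wf (Blind a b)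
| wf_pair a b : wf a -> wf b -> wf (Pair a b)
| wf_enc a b : wf a -> wf b -> wf (Enc a b)
| wf_fn f l : length l = ar f -> (forall a, In a l -> wf a) -> wf (Fn f l).

Inductive pure (i : nat) : term -> Prop :=
| pure_var x : pure i (Var x)
| pure_fn f l : ti f = i -> (forall a, In a l -> pure i a) -> pure i (Fn f l).

Fixpoint subst (s : nat -> term) (t : term) : term :=
  match t with
  | Name n => Name n
  | Var x => s x
  | Pub a => Pub (subst s a)
  | Sign a b => Sign (subst s a) (subst s b)
  | Blind a b => Blind (subst s a) (subst s b)
  | Pair a b => Pair (subst s a) (subst s b)
  | Enc a b => Enc (subst s a) (subst s b)
  | Fn f l => Fn f (map (subst s) l)
  end.

Inductive ctx (r : term -> term -> Prop) : term -> term -> Prop :=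
| ctx_root s t : r s t -> ctx r s t
| ctx_pub s t : ctx r s t -> ctx r (Pub s) (Pub t)
| ctx_sign1 s t u : ctx r s t -> ctx r (Sign s u) (Sign t u)
| ctx_sign2 s t u : ctx r s t -> ctx r (Sign u s) (Sign u t)
| ctx_blind1 s t u : ctx r s t -> ctx r (Blind s u) (Blind t u)
| ctx_blind2 s t u : ctx r s t -> ctx r (Blind u s) (Blind u t)
| ctx_pair1 s t u : ctx r s t -> ctx r (Pair s u) (Pair t u)
| ctx_pair2 s t u : ctx r s t -> ctx r (Pair u s) (Pair u t)
| ctx_enc1 s t u : ctx r s t -> ctx r (Enc s u) (Enc t u)
| ctx_enc2 s t u : ctx r s t -> ctx r (Enc u s) (Enc u t)
| ctx_fn f l1 l2 s t : ctx r s t -> ctx r (Fn f (l1 ++ s :: l2)) (Fn f (l1 ++ t :: l2)).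

Inductive ac_root : term -> term -> Prop :=
| ac_comm f a b : ac f = true -> ac_root (Fn f [a; b]) (Fn f [b; a])
| ac_assoc f a b c : ac f = true ->
    ac_root (Fn f [a; Fn f [b; c]]) (Fn f [Fn f [a; b]; c]).

Definition acEq : term -> term -> Prop := clos_refl_sym_trans term (ctx ac_root).

Definition rule_set := term -> term -> Prop.
Definition RE : rule_set := fun l r => In (l, r) R.
Definition Ri (i : nat) : rule_set := fun l r => In (l, r) R /\ pure i l /\ pure i r.

Inductive rroot (P : rule_set) : term -> term -> Prop :=
| rroot_intro l r s : P l r -> rroot P (subst s l) (subst s r).

Definition rstep (P : rule_set) : term -> term -> Prop := ctx (rroot P).

Definition rstep_mod (P : rule_set) (s t : term) : Prop :=
  exists s' t', acEq s s' /\ rstep P s' t' /\ acEq t' t.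

Definition eqR (P : rule_set) : term -> term -> Prop :=
  clos_refl_sym_trans term (fun s t => rstep P s t \/ ctx ac_root s t).

Definition terminating_mod (P : rule_set) : Prop :=
  well_founded (fun t s => rstep_mod P s t).

Definition CR_mod (P : rule_set) : Prop :=
  forall s t, eqR P s t ->
  exists u v, clos_refl_trans term (rstep_mod P) s u /\
              clos_refl_trans term (rstep_mod P) t v /\ acEq u v.

Definition eqE : term -> term -> Prop := eqR RE.

Definition irreducible (t : term) : Prop := ~ exists u, rstep_mod RE t u.

Definition is_nf (M N : term) : Prop :=
  clos_refl_trans term (rstep_mod RE) M N /\ irreducible N.

Record valid_theory : Prop := {
  vt_finite : exists n, forall f, ti f < n;
  vt_ac_arity : forall f, ac f = true -> ar f = 2;
  vt_ac_unique : forall f g, ac f = true -> ac g = true -> ti f = ti g -> f = g;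
  vt_rules_pure : forall l r, In (l, r) R -> exists i, pure i l /\ pure i r;
  vt_rules_wf : forall l r, In (l, r) R -> wf l /\ wf r;
  vt_terminating : terminating_mod RE;
  vt_confluent : CR_mod RE;
  vt_components : forall i, terminating_mod (Ri i) /\ CR_mod (Ri i)
}.

Definition guarded (t : term) : Prop :=
  match t with Fn _ _ => False | _ => True end.

Definition cross_subterm (N t : term) : Prop :=
  exists g args f fargs, subterm (Fn g args) t /\ In N args /\
    N = Fn f fargs /\ ti f <> ti g.

(* t = C[M_1,...,M_k] for an E_i-context C and M_l in G *)
Inductive ctx_inst (i : nat) (G : list term) : term -> Prop :=
| ci_hole t : In t G -> ctx_inst i G t
| ci_fn f l : ti f = i -> length l = ar f ->
    (forall a, In a l -> ctx_inst i G a) -> ctx_inst i G (Fn f l).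

Inductive Nd (G : list term) : term -> Prop :=
| N_id M : In M G -> Nd G M
| N_eE M K : Nd G (Enc M K) -> Nd G K -> Nd G M
| N_eI M K : Nd G M -> Nd G K -> Nd G (Enc M K)
| N_pE1 M N : Nd G (Pair M N) -> Nd G M
| N_pE2 M N : Nd G (Pair M N) -> Nd G N
| N_pI M N : Nd G M -> Nd G N -> Nd G (Pair M N)
| N_signE M K : Nd G (Sign M K) -> Nd G (Pub K) -> Nd G M
| N_signI M K : Nd G M -> Nd G K -> Nd G (Sign M K)
| N_blindE1 M K : Nd G (Blind M K) -> Nd G K -> Nd G M
| N_blindI M K : Nd G M -> Nd G K -> Nd G (Blind M K)
| N_blindE2 M Rr K : Nd G (Sign (Blind M Rr) K) -> Nd G Rr -> Nd G (Sign M K)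
| N_gI f l : length l = ar f -> (forall a, In a l -> Nd G a) -> Nd G (Fn f l)
| N_approx M N : Nd G N -> eqE M N -> wf M -> Nd G M.

Definition nf_seq (G : list term) (T : term) : Prop :=
  (forall t, In t G -> wf t /\ irreducible t) /\ wf T /\ irreducible T.

Inductive Dd : list term -> term -> Prop :=
| D_id i G M : nf_seq G M -> (exists t, ctx_inst i G t /\ eqE M t) -> Dd G M
| D_cut G M T : nf_seq G T -> Dd G M -> Dd (M :: G) T -> Dd G T
| D_pL G M N T : nf_seq G T -> In (Pair M N) G -> Dd (M :: N :: G) T -> Dd G T
| D_pR G M N : nf_seq G (Pair M N) -> Dd G M -> Dd G N -> Dd G (Pair M N)
| D_eL G M K N : nf_seq G N -> In (Enc M K) G -> Dd G K -> Dd (M :: K :: G) N -> Dd G N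
| D_eR G M K : nf_seq G (Enc M K) -> Dd G M -> Dd G K -> Dd G (Enc M K)
| D_signL G M K L N : nf_seq G N -> In (Sign M K) G -> In (Pub L) G -> acEq K L ->
    Dd (M :: G) N -> Dd G N
| D_signR G M K : nf_seq G (Sign M K) -> Dd G M -> Dd G K -> Dd G (Sign M K)
| D_blindL1 G M K N : nf_seq G N -> In (Blind M K) G -> Dd G K ->
    Dd (M :: K :: G) N -> Dd G N
| D_blindR G M K : nf_seq G (Blind M K) -> Dd G M -> Dd G K -> Dd G (Blind M K)
| D_blindL2 G M Rr K N : nf_seq G N -> In (Sign (Blind M Rr) K) G -> Dd G Rr ->
    Dd (Sign M K :: Rr :: G) N -> Dd G N
| D_gs G A M : nf_seq G M -> guarded A ->
    (exists t, (In t G \/ t = M) /\ subterm A t) ->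
    Dd G A -> Dd (A :: G) M -> Dd G M
| D_cs G N M : nf_seq G M ->
    (exists t, (In t G \/ t = M) /\ cross_subterm N t) ->
    Dd G N -> Dd (N :: G) M -> Dd G M.

End Theory.

(* Main.v *)
Require Import Defs.
From Stdlib Require Import List.
From Stdlib Require Import Relations Classical Arith PeanoNat.
Import ListNotations.

Section S.
Variables (F : Type) (ar ti : F -> nat) (ac : F -> bool) (R : list (term F * term F)).
Hypothesis HE : valid_theory ar ti ac R.
Notation term := (term F).
Notation crt := (clos_refl_trans term).
Notation crst := (clos_refl_sym_trans term).
Notation eqE := (eqE ac R).
Notation acEq := (acEq ac).
Notation rstep := (rstep (RE R)).
Notation rsm := (rstep_mod ac (RE R)).
Notation irr := (irreducible ac R).
Notation wf := (wf ar).

Fixpoint term_ind' (P : term -> Prop)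
  (hN : forall n, P (Name n)) (hV : forall x, P (Var x))
  (hP : forall a, P a -> P (Pub a))
  (hS : forall a b, P a -> P b -> P (Sign a b))
  (hB : forall a b, P a -> P b -> P (Blind a b))
  (hPa : forall a b, P a -> P b -> P (Pair a b))
  (hE : forall a b, P a -> P b -> P (Enc a b))
  (hF : forall f l, (forall a, In a l -> P a) -> P (Fn f l)) (t : term) : P t :=
  let rec := term_ind' P hN hV hP hS hB hPa hE hF in
  match t with
  | Name n => hN n | Var x => hV x
  | Pub a => hP a (rec a)
  | Sign a b => hS a b (rec a) (rec b)
  | Blind a b => hB a b (rec a) (rec b)
  | Pair a b => hPa a b (rec a) (rec b)
  | Enc a b => hE a b (rec a) (rec b)
  | Fn f l => hF f l ((fix go (l : list term) : forall a, In a l -> P a :=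
       match l with
       | [] => fun a H => False_ind _ H
       | b :: l' => fun a H => match H with
                   | or_introl e => eq_ind b P (rec b) a e
                   | or_intror H' => go l' a H' end
       end) l)
  end.

Definition Cctx (C : term -> term) := forall P s t, ctx P s t -> ctx P (C s) (C t).

Lemma plug a t : In a (args_of t) ->
  exists C, t = C a /\ Cctx C /\ forall x, In x (args_of (C x)).
Proof.
  destruct t; simpl; intros H; try contradiction;
  repeat (destruct H as [<-|H]); try contradiction.
  - exists (fun x => Pub x); repeat split; [intros P s u Hc; now constructor | intros; simpl; auto].
  - exists (fun x => Sign x t2); repeat split; [intros P s u Hc; now constructor | intros; simpl; auto].
  - exists (fun x => Sign t1 x); repeat split; [intros P s u Hc; now constructor | intros; simpl; auto].
  - exists (fun x => Blind x t2); repeat split; [intros P s u Hc; now constructor | intros; simpl; auto].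
  - exists (fun x => Blind t1 x); repeat split; [intros P s u Hc; now constructor | intros; simpl; auto].
  - exists (fun x => Pair x t2); repeat split; [intros P s u Hc; now constructor | intros; simpl; auto].
  - exists (fun x => Pair t1 x); repeat split; [intros P s u Hc; now constructor | intros; simpl; auto].
  - exists (fun x => Enc x t2); repeat split; [intros P s u Hc; now constructor | intros; simpl; auto].
  - exists (fun x => Enc t1 x); repeat split; [intros P s u Hc; now constructor | intros; simpl; auto].
  - destruct (in_split _ _ H) as (l1 & l2 & ->).
    exists (fun x => Fn f (l1 ++ x :: l2)); repeat split.
    + intros P s u Hc; now constructor.
    + intros; simpl; apply in_or_app; simpl; auto.
Qed.

Lemma crst_lift (r : term -> term -> Prop) C a b :
  (forall x y, r x y -> r (C x) (C y)) -> crst r a b -> crst r (C a) (C b).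
Proof.
  intros H Hc; induction Hc.
  - apply rst_step; auto.
  - apply rst_refl.
  - now apply rst_sym.
  - eapply rst_trans; eauto.
Qed.

Lemma eqE_lift C a b : Cctx C -> eqE a b -> eqE (C a) (C b).
Proof.
  intros HC; apply crst_lift; intros x y [H|H]; [left|right]; now apply HC.
Qed.

Lemma acEq_lift C a b : Cctx C -> acEq a b -> acEq (C a) (C b).
Proof. intros HC; apply crst_lift; intros x y H; now apply HC. Qed.

Lemma acEq_eqE a b : acEq a b -> eqE a b.
Proof.
  intro H; induction H.
  - apply rst_step; now right.
  - apply rst_refl.
  - now apply rst_sym.
  - eapply rst_trans; eauto.
Qed.

Lemma rstep_eqE a b : rstep a b -> eqE a b.
Proof. intro; apply rst_step; now left. Qed.

Lemma rsm_eqE a b : rsm a b -> eqE a b.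
Proof.
  intros (a' & b' & H1 & H2 & H3).
  eapply rst_trans; [apply acEq_eqE; eauto|].
  eapply rst_trans; [apply rstep_eqE; eauto| apply acEq_eqE; eauto].
Qed.

Lemma crt_rsm_eqE a b : crt rsm a b -> eqE a b.
Proof.
  intro H; induction H; [now apply rsm_eqE | apply rst_refl | eapply rst_trans; eauto].
Qed.

Lemma eqE_sym a b : eqE a b -> eqE b a.
Proof. apply rst_sym. Qed.
Lemma eqE_trans a b c : eqE a b -> eqE b c -> eqE a c.
Proof. apply rst_trans. Qed.

Lemma irr_arg t a : irr t -> In a (args_of t) -> irr a.
Proof.
  intros Ht Ha [u (a' & u' & H1 & H2 & H3)].
  destruct (plug _ _ Ha) as (C & -> & HC & _).
  apply Ht; exists (C u), (C a'), (C u'); repeat split.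
  - now apply acEq_lift.
  - now apply HC.
  - now apply acEq_lift.
Qed.

Lemma wf_arg t a : wf t -> In a (args_of t) -> wf a.
Proof.
  intros Ht Ha; destruct Ht; simpl in Ha; intuition (subst; auto).
Qed.

Lemma subterm_wf a t : subterm a t -> wf t -> wf a.
Proof.
  intro H; induction H; intros; eauto using wf_arg.
Qed.

Lemma subterm_subst (s : nat -> term) a t : subterm a t -> subterm (subst s a) (subst s t).
Proof.
  intro H; induction H.
  - apply rt_step; destruct y; simpl in *; intuition (subst; auto).
    apply in_map; auto.
  - apply rt_refl.
  - eapply rt_trans; eauto.
Qed.

Lemma sub_arg (a t : term) : In a (args_of t) -> subterm a t.
Proof. intro; now apply rt_step. Qed.

Lemma sub_up (x a t : term) : subterm x a -> In a (args_of t) -> subterm x t.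
Proof. intros H1 H2; eapply rt_trans; [exact H1| now apply sub_arg]. Qed.

Lemma wf_subst (s : nat -> term) t : wf t -> (forall x, subterm (Var x) t -> wf (s x)) -> wf (subst s t).
Proof.
  revert t; refine (term_ind' _ _ _ _ _ _ _ _ _); intros; simpl.
  - constructor.
  - apply H0, rt_refl.
  - inversion H0; constructor; apply H; auto; intros y Hy; apply H1; eapply sub_up; eauto; simpl; auto.
  - inversion H1; constructor; [apply H|apply H0]; auto; intros y Hy; apply H2; eapply sub_up; eauto; simpl; auto.
  - inversion H1; constructor; [apply H|apply H0]; auto; intros y Hy; apply H2; eapply sub_up; eauto; simpl; auto.
  - inversion H1; constructor; [apply H|apply H0]; auto; intros y Hy; apply H2; eapply sub_up; eauto; simpl; auto.
  - inversion H1; constructor; [apply H|apply H0]; auto; intros y Hy; apply H2; eapply sub_up; eauto; simpl; auto.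
  - inversion H0; subst. constructor.
    + now rewrite length_map.
    + intros a Ha; apply in_map_iff in Ha as (b & <- & Hb).
      apply H; auto. intros y Hy; apply H1; eapply sub_up; eauto; simpl; auto.
Qed.

Lemma subst_id (s : nat -> term) t : (forall y, subterm (Var y) t -> s y = Var y) -> subst s t = t.
Proof.
  revert t; refine (term_ind' _ _ _ _ _ _ _ _ _); intros; simpl; auto.
  - apply H, rt_refl.
  - f_equal; apply H; intros y Hy; apply H0; eapply sub_up; eauto; simpl; auto.
  - f_equal; [apply H|apply H0]; intros y Hy; apply H1; eapply sub_up; eauto; simpl; auto.
  - f_equal; [apply H|apply H0]; intros y Hy; apply H1; eapply sub_up; eauto; simpl; auto.
  - f_equal; [apply H|apply H0]; intros y Hy; apply H1; eapply sub_up; eauto; simpl; auto.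
  - f_equal; [apply H|apply H0]; intros y Hy; apply H1; eapply sub_up; eauto; simpl; auto.
  - f_equal. rewrite <- (map_id l) at 2. apply map_ext_in. intros a Ha; apply H; auto.
    intros y Hy; apply H0; eapply sub_up; eauto; simpl; auto.
Qed.


Lemma rstep_rsm a b : rstep a b -> rsm a b.
Proof. intro H; exists a, b; repeat split; auto; apply rst_refl. Qed.

Lemma rule_fn l r : In (l, r) R -> exists f ls, l = Fn f ls.
Proof.
  intro Hr. destruct (vt_rules_pure HE _ _ Hr) as (i & Hl & _).
  destruct Hl as [y|f ls]; [|eauto].
  exfalso.
  assert (forall t, Acc (fun t s => rsm s t) t -> False) as K.
  { intros t Ht; induction Ht as [t _ IH].
    apply (IH (subst (fun _ => t) r)). apply rstep_rsm.
    apply ctx_root. change t with (subst (fun _ => t) (Var y)) at 1. now constructor. }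
  exact (K (Name 0) (vt_terminating HE _)).
Qed.

Lemma rule_vars l r x : In (l, r) R -> subterm (Var x) r -> subterm (Var x) l.
Proof.
  intros Hr Hx. apply NNPP; intro Hn.
  set (s := fun y => if Nat.eqb y x then l else Var y).
  assert (Hsl : subst s l = l).
  { apply subst_id; intros y Hy; unfold s.
    destruct (Nat.eqb_spec y x); [subst; contradiction|auto]. }
  assert (Hst : rstep l (subst s r)).
  { apply ctx_root. rewrite <- Hsl at 1. now constructor. }
  assert (Hsub : subterm l (subst s r)).
  { apply (subterm_subst s) in Hx. simpl in Hx. unfold s in Hx at 1.
    rewrite Nat.eqb_refl in Hx; exact Hx. }
  assert (prop : forall a b, subterm a b -> (exists u, rstep a u /\ subterm l u) ->
                 exists u, rstep b u /\ subterm l u).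
  { intros a b H; induction H; auto.
    intros (u & Hu1 & Hu2). destruct (plug _ _ H) as (C & -> & HC & Hin).
    exists (C u); split; [now apply HC|]. eapply rt_trans; [exact Hu2|apply sub_arg, Hin]. }
  assert (forall t, Acc (fun t s => rsm s t) t -> subterm l t -> False) as K.
  { intros t Ht; induction Ht as [t _ IH]; intros Hl.
    destruct (prop l t Hl (ex_intro _ _ (conj Hst Hsub))) as (u & Hu1 & Hu2).
    exact (IH u (rstep_rsm _ _ Hu1) Hu2). }
  exact (K l (vt_terminating HE _) (rt_refl _ _ _)).
Qed.

Definition isFn (t : term) := match t with Fn _ _ => True | _ => False end.

Lemma rroot_fn s t : rroot (RE R) s t -> isFn s.
Proof.
  intro H; destruct H as [l r sb Hr]. destruct (rule_fn _ _ Hr) as (f & ls & ->); simpl; auto.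
Qed.

Lemma rroot_wf s t : rroot (RE R) s t -> wf s -> wf t.
Proof.
  intros H Hs; destruct H as [l r sb Hr].
  destruct (vt_rules_wf HE _ _ Hr) as [Hl Hrr].
  apply wf_subst; auto. intros x Hx.
  apply (rule_vars _ _ _ Hr) in Hx. apply (subterm_subst sb) in Hx.
  eapply subterm_wf; eauto.
Qed.

Lemma ac_root_wf s t : ac_root ac s t -> (wf s <-> wf t).
Proof.
  intro H; destruct H as [f a b Hf|f a b c Hf]; pose proof (vt_ac_arity HE _ Hf) as Ha;
  split; intro W; inversion W; subst.
  - constructor; auto. intros x Hx; apply H2; simpl in *; tauto.
  - constructor; auto. intros x Hx; apply H2; simpl in *; tauto.
  - assert (wf (Fn f [b; c])) as W2 by (apply H2; simpl; auto).
    inversion W2 as [| | | | | | |? ? L2 H4]; subst.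
    constructor; simpl; auto. intros x [<-|[<-|[]]].
    + constructor; simpl; auto. intros y [<-|[<-|[]]]; [apply H2|apply H4]; simpl; auto.
    + apply H4; simpl; auto.
  - assert (wf (Fn f [a; b])) as W2 by (apply H2; simpl; auto).
    inversion W2 as [| | | | | | |? ? L2 H4]; subst.
    constructor; simpl; auto. intros x [<-|[<-|[]]].
    + apply H4; simpl; auto.
    + constructor; simpl; auto. intros y [<-|[<-|[]]]; [apply H4|apply H2]; simpl; auto.
Qed.

Lemma ctx_wf (P : term -> term -> Prop) : (forall s t, P s t -> wf s -> wf t) -> forall s t, ctx P s t -> wf s -> wf t.
Proof.
  intros HP s t H; induction H; intro W; [eapply HP; eauto|..];
  try (inversion W; subst; constructor; auto; fail).
  inversion W; subst. constructor.
  - rewrite length_app in *; simpl in *; auto.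
  - intros a Ha; apply in_app_or in Ha; destruct Ha as [Ha|[<-|Ha]];
    [apply H3; apply in_or_app; auto | apply IHctx, H3; apply in_or_app; simpl; auto
    | apply H3; apply in_or_app; simpl; auto].
Qed.

Lemma ctx_transp (P : term -> term -> Prop) s t : ctx P s t -> ctx (fun a b => P b a) t s.
Proof. intro H; induction H; [apply ctx_root; exact H|..]; [apply ctx_pub|apply ctx_sign1|apply ctx_sign2|apply ctx_blind1|apply ctx_blind2|apply ctx_pair1|apply ctx_pair2|apply ctx_enc1|apply ctx_enc2|apply ctx_fn]; auto. Qed.

Lemma ctx_mono (P Q : term -> term -> Prop) s t : (forall a b, P a b -> Q a b) -> ctx P s t -> ctx Q s t.
Proof. intros HPQ H; induction H; [apply ctx_root; auto|..]; [apply ctx_pub|apply ctx_sign1|apply ctx_sign2|apply ctx_blind1|apply ctx_blind2|apply ctx_pair1|apply ctx_pair2|apply ctx_enc1|apply ctx_enc2|apply ctx_fn]; auto. Qed.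

Lemma acEq_wf s t : acEq s t -> (wf s <-> wf t).
Proof.
  intro H; induction H; try tauto.
  split; intro W.
  - refine (ctx_wf (ac_root ac) _ _ _ H W). intros a b Hab; exact (proj1 (ac_root_wf _ _ Hab)).
  - refine (ctx_wf (fun a b => ac_root ac b a) _ _ _ (ctx_transp _ _ _ H) W).
    intros a b Hab; exact (proj2 (ac_root_wf _ _ Hab)).
Qed.

Lemma rsm_wf s t : rsm s t -> wf s -> wf t.
Proof.
  intros (s' & t' & H1 & H2 & H3) W.
  apply (acEq_wf _ _ H3). eapply ctx_wf; [apply rroot_wf| exact H2|].
  now apply (acEq_wf _ _ H1).
Qed.

Lemma crt_rsm_wf s t : crt rsm s t -> wf s -> wf t.
Proof. intro H; induction H; eauto using rsm_wf. Qed.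

Definition Pac (s t : term) := ac_root ac s t \/ ac_root ac t s.
Definition Pall (s t : term) := rroot (RE R) s t \/ Pac s t.

Lemma ac_fn s t : ac_root ac s t -> isFn s /\ isFn t.
Proof. intro H; destruct H; simpl; auto. Qed.

Lemma Pac_fn s t : Pac s t -> isFn s.
Proof. intros [H|H]; apply ac_fn in H; tauto. Qed.

Lemma Pall_fn s t : Pall s t -> isFn s.
Proof. intros [H|H]; [eapply rroot_fn; eauto| eapply Pac_fn; eauto]. Qed.

Definition same_head (t u : term) : Prop :=
  match t, u with
  | Name n, Name m => n = m | Var x, Var y => x = y
  | Pub _, Pub _ | Sign _ _, Sign _ _ | Blind _ _, Blind _ _
  | Pair _ _, Pair _ _ | Enc _ _, Enc _ _ | Fn _ _, Fn _ _ => True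
  | _, _ => False end.

Lemma same_head_refl t : same_head t t.
Proof. destruct t; simpl; auto. Qed.

Lemma same_head_trans t u v : same_head t u -> same_head u v -> same_head t v.
Proof. destruct t, u, v; simpl; intros; try contradiction; auto; congruence. Qed.

Lemma same_head_nfn t u : same_head t u -> ~ isFn t -> ~ isFn u.
Proof. destruct t, u; simpl; tauto. Qed.

Lemma Forall2_refl {A} (Rel : A -> A -> Prop) l : (forall x, Rel x x) -> Forall2 Rel l l.
Proof. intros H; induction l; constructor; auto. Qed.

Lemma Forall2_trans {A} (Rel : A -> A -> Prop) l1 l2 l3 : (forall x y z, Rel x y -> Rel y z -> Rel x z) ->
  Forall2 Rel l1 l2 -> Forall2 Rel l2 l3 -> Forall2 Rel l1 l3.
Proof.
  intros HT H1; revert l3; induction H1; intros l3 H2; inversion H2; subst; constructor; eauto.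
Qed.

Lemma ctx_shape (P : term -> term -> Prop) (HP : forall s t, P s t -> isFn s) t u :
  ctx P t u -> ~ isFn t -> same_head t u /\ Forall2 (crt (ctx P)) (args_of t) (args_of u).
Proof.
  intros H Hn; destruct H; simpl in *;
  try (exfalso; apply Hn; eapply HP; eauto; fail); try contradiction;
  split; auto; repeat apply Forall2_cons; try apply Forall2_nil; first [apply rt_step; assumption | apply rt_refl].
Qed.

Lemma crt_shape (P : term -> term -> Prop) (HP : forall s t, P s t -> isFn s) t u :
  crt (ctx P) t u -> ~ isFn t -> same_head t u /\ Forall2 (crt (ctx P)) (args_of t) (args_of u).
Proof.
  intro H; induction H; intro Hn.
  - now apply ctx_shape.
  - split; [apply same_head_refl| apply Forall2_refl; intro; apply rt_refl].
  - destruct (IHclos_refl_trans1 Hn) as [A1 B1].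
    destruct (IHclos_refl_trans2 (same_head_nfn _ _ A1 Hn)) as [A2 B2].
    split; [eapply same_head_trans; eauto| eapply Forall2_trans; eauto].
    intros; eapply rt_trans; eauto.
Qed.

Lemma ctx_or (P Q : term -> term -> Prop) s t : ctx (fun a b => P a b \/ Q a b) s t -> ctx P s t \/ ctx Q s t.
Proof.
  intro H; induction H;
  [destruct H; [left|right]; now apply ctx_root|..];
  (destruct IHctx as [X|X]; [left|right];
  first [apply ctx_pub|apply ctx_sign1|apply ctx_sign2|apply ctx_blind1|apply ctx_blind2|apply ctx_pair1|apply ctx_pair2|apply ctx_enc1|apply ctx_enc2|apply ctx_fn]; exact X).
Qed.

Lemma acEq_crt a b : acEq a b -> crt (ctx Pac) a b /\ crt (ctx Pac) b a.
Proof.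
  intro H; induction H.
  - split; apply rt_step.
    + eapply ctx_mono; [|exact H]. intros; left; auto.
    + eapply ctx_mono; [|exact (ctx_transp _ _ _ H)]. intros; right; auto.
  - split; apply rt_refl.
  - tauto.
  - destruct IHclos_refl_sym_trans1, IHclos_refl_sym_trans2; split; eapply rt_trans; eauto.
Qed.

Lemma crt_Pac_acEq a b : crt (ctx Pac) a b -> acEq a b.
Proof.
  intro H; induction H.
  - destruct (ctx_or _ _ _ _ H) as [H1|H1].
    + now apply rst_step.
    + apply rst_sym, rst_step. exact (ctx_transp _ _ _ H1).
  - apply rst_refl.
  - eapply rst_trans; eauto.
Qed.

Lemma crt_Pac_Pall a b : crt (ctx Pac) a b -> crt (ctx Pall) a b.
Proof.
  intro H; induction H; [apply rt_step; eapply ctx_mono; [|exact H]; intros; right; auto|apply rt_refl|eapply rt_trans; eauto].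
Qed.

Lemma rsm_Pall a b : rsm a b -> crt (ctx Pall) a b.
Proof.
  intros (a' & b' & H1 & H2 & H3).
  eapply rt_trans; [apply crt_Pac_Pall, (acEq_crt _ _ H1)|].
  eapply rt_trans; [apply rt_step; eapply ctx_mono; [|exact H2]; intros; left; auto|].
  apply crt_Pac_Pall, (acEq_crt _ _ H3).
Qed.

Lemma crt_rsm_Pall a b : crt rsm a b -> crt (ctx Pall) a b.
Proof. intro H; induction H; [now apply rsm_Pall|apply rt_refl|eapply rt_trans; eauto]. Qed.

Lemma crt_Pall_eqE a b : crt (ctx Pall) a b -> eqE a b.
Proof.
  intro H; induction H.
  - destruct (ctx_or _ _ _ _ H) as [H1|H1].
    + now apply rstep_eqE.
    + apply acEq_eqE, crt_Pac_acEq, rt_step, H1.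
  - apply rst_refl.
  - eapply rst_trans; eauto.
Qed.

Lemma irr_sign a b : irr a -> irr b -> irr (Sign a b).
Proof.
  intros Ha Hb [w (s' & t' & H1 & H2 & H3)].
  destruct (crt_shape Pac Pac_fn _ _ (proj1 (acEq_crt _ _ H1)) (fun x => x)) as [Sh Fa].
  destruct s'; simpl in Sh; try contradiction.
  inversion Fa as [|? ? ? ? Fa1 Fb]; subst. inversion Fb as [|? ? ? ? Fb1 _]; subst.
  inversion H2; subst.
  - apply rroot_fn in H; simpl in H; contradiction.
  - apply Ha; exists t; exists s'1, t; repeat split; auto; [apply crt_Pac_acEq; auto|apply rst_refl].
  - apply Hb; exists t; exists s'2, t; repeat split; auto; [apply crt_Pac_acEq; auto|apply rst_refl].
Qed.

Notation Nd := (Nd ar ac R).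
Notation Dd := (Dd ar ti ac R).
Definition good t := wf t /\ irr t.

Lemma Dd_nf G T : Dd G T -> nf_seq ar ac R G T.
Proof. intro H; destruct H; auto. Qed.

Lemma ctx_inst_Nd i G0 G t : ctx_inst ar ti i G t -> (forall x, In x G -> Nd G0 x) -> Nd G0 t.
Proof.
  intros H HG; induction H.
  - now apply HG.
  - apply N_gI; auto.
Qed.

Lemma sound G T : Dd G T -> forall G0, (forall x, In x G -> Nd G0 x) -> Nd G0 T.
Proof.
  intro H; induction H; intros G0 HG0.
  - destruct H0 as (t & Ht & He). destruct H as (_ & W & _).
    eapply N_approx; [eapply ctx_inst_Nd; eauto|exact He|exact W].
  - apply IHDd2; intros x [<-|Hx]; auto.
  - apply IHDd; intros x [<-|[<-|Hx]]; auto.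
    + eapply N_pE1; eauto.
    + eapply N_pE2; eauto.
  - apply N_pI; auto.
  - apply IHDd2; intros x [<-|[<-|Hx]]; auto.
    eapply N_eE; eauto.
  - apply N_eI; auto.
  - apply IHDd; intros x [<-|Hx]; auto.
    eapply N_signE; [apply HG0; eauto|].
    destruct H as (HG & _). destruct (HG _ H0) as (W & _). inversion W; subst.
    eapply N_approx; [apply HG0; exact H1| |constructor; auto].
    apply (eqE_lift (fun x => Pub x)); [intros P0 a b Hc; now apply ctx_pub|].
    now apply acEq_eqE.
  - apply N_signI; auto.
  - apply IHDd2; intros x [<-|[<-|Hx]]; auto.
    eapply N_blindE1; eauto.
  - apply N_blindI; auto.
  - apply IHDd2; intros x [<-|[<-|Hx]]; auto.
    eapply N_blindE2; eauto.
  - apply IHDd2; intros x [<-|Hx]; auto.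
  - apply IHDd2; intros x [<-|Hx]; auto.
Qed.

Lemma Nd_wf G M : Nd G M -> (forall t, In t G -> wf t) -> wf M.
Proof.
  intros H HG; induction H; auto.
  - inversion IHNd1; auto.
  - constructor; auto.
  - inversion IHNd; auto.
  - inversion IHNd; auto.
  - constructor; auto.
  - inversion IHNd1; auto.
  - constructor; auto.
  - inversion IHNd1; auto.
  - constructor; auto.
  - inversion IHNd1; subst. inversion H3; subst. constructor; auto.
  - constructor; auto.
Qed.

Lemma ctx_inst_mono i G G' t : ctx_inst ar ti i G t -> incl G G' -> ctx_inst ar ti i G' t.
Proof.
  intros H Hi; induction H.
  - apply ci_hole; auto.
  - apply ci_fn; auto.
Qed.

Lemma nfs_of G G' T : nf_seq ar ac R G T -> (forall x, In x G' -> good x) -> nf_seq ar ac R G' T.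
Proof. intros (_ & W & I) HG'; split; auto. Qed.

Lemma good_cons G x : (forall y, In y (x :: G) -> good y) -> good x /\ (forall y, In y G -> good y).
Proof. intro H; split; [apply H; simpl; auto| intros; apply H; simpl; auto]. Qed.

Lemma weak G T : Dd G T -> forall G', incl G G' -> (forall x, In x G' -> good x) -> Dd G' T.
Proof.
  intro H; induction H; intros G' Hi HG'.
  - eapply D_id; [eapply nfs_of; eauto|]. destruct H0 as (t & Ht & He).
    exists t; split; auto. eapply ctx_inst_mono; eauto.
  - eapply D_cut; [eapply nfs_of; eauto|apply IHDd1; auto|].
    apply IHDd2; [intros z Hz; simpl in *; intuition|].
    intros x [<-|Hx]; auto. destruct (Dd_nf _ _ H0) as (_ & W & I). split; auto.
  - eapply D_pL; [eapply nfs_of; eauto|apply Hi; eauto|].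
    apply IHDd; [intros z Hz; simpl in *; intuition|].
    destruct (Dd_nf _ _ H1) as (HH & _).
    intros x [<-|[<-|Hx]]; auto; apply HH; simpl; auto.
  - eapply D_pR; [eapply nfs_of; eauto|auto|auto].
  - eapply D_eL; [eapply nfs_of; eauto|apply Hi; eauto|auto|].
    apply IHDd2; [intros z Hz; simpl in *; intuition|].
    destruct (Dd_nf _ _ H2) as (HH & _).
    intros x [<-|[<-|Hx]]; auto; apply HH; simpl; auto.
  - eapply D_eR; [eapply nfs_of; eauto|auto|auto].
  - eapply D_signL; [eapply nfs_of; eauto|apply Hi; eauto|apply Hi; eauto|eauto|].
    apply IHDd; [intros z Hz; simpl in *; intuition|].
    destruct (Dd_nf _ _ H3) as (HH & _).
    intros x [<-|Hx]; auto; apply HH; simpl; auto.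
  - eapply D_signR; [eapply nfs_of; eauto|auto|auto].
  - eapply D_blindL1; [eapply nfs_of; eauto|apply Hi; eauto|auto|].
    apply IHDd2; [intros z Hz; simpl in *; intuition|].
    destruct (Dd_nf _ _ H2) as (HH & _).
    intros x [<-|[<-|Hx]]; auto; apply HH; simpl; auto.
  - eapply D_blindR; [eapply nfs_of; eauto|auto|auto].
  - eapply D_blindL2; [eapply nfs_of; eauto|apply Hi; eauto|auto|].
    apply IHDd2; [intros z Hz; simpl in *; intuition|].
    destruct (Dd_nf _ _ H2) as (HH & _).
    intros x [<-|[<-|Hx]]; auto; apply HH; simpl; auto.
  - eapply D_gs with (A := A); [eapply nfs_of; eauto|auto| |auto|].
    + destruct H1 as (t & Ht & Hs); exists t; split; auto; destruct Ht; [left; apply Hi; auto|right; auto].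
    + apply IHDd2; [intros z Hz; simpl in *; intuition|].
      destruct (Dd_nf _ _ H3) as (HH & _).
      intros x [<-|Hx]; auto; apply HH; simpl; auto.
  - eapply D_cs with (N := N); [eapply nfs_of; eauto| |auto|].
    + destruct H0 as (t & Ht & Hs); exists t; split; auto; destruct Ht; [left; apply Hi; auto|right; auto].
    + apply IHDd2; [intros z Hz; simpl in *; intuition|].
      destruct (Dd_nf _ _ H2) as (HH & _).
      intros x [<-|Hx]; auto; apply HH; simpl; auto.
Qed.

Lemma Dd_good G T : Dd G T -> forall x, In x G -> good x.
Proof. intros H x Hx; destruct (Dd_nf _ _ H) as (HH & _); now apply HH. Qed.
Lemma Dd_goodT G T : Dd G T -> good T.
Proof. intros H; destruct (Dd_nf _ _ H) as (_ & W & I); split; auto. Qed.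

Lemma cutD G X T : Dd G X -> Dd (X :: G) T -> Dd G T.
Proof.
  intros H1 H2; eapply D_cut with (M := X); auto.
  destruct (Dd_nf _ _ H2) as (HH & W & I); split; auto; intros; apply HH; simpl; auto.
Qed.

Lemma idD G X Y : In X G -> (forall x, In x G -> good x) -> good Y -> eqE Y X -> Dd G Y.
Proof.
  intros Hi HG [W I] He. apply D_id with (i := 0); [split; auto|].
  exists X; split; auto. now apply ci_hole.
Qed.

Lemma convD G X Y : Dd G X -> good Y -> eqE Y X -> Dd G Y.
Proof.
  intros H GY He. apply cutD with X; auto. apply idD with X; simpl; auto.
  intros x [<-|Hx]; [eapply Dd_goodT; eauto|eapply Dd_good; eauto].
Qed.

Lemma crt_rsm_irr x y : crt rsm x y -> irr x -> x = y.
Proof.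
  intros H I; apply clos_rt_rt1n in H; destruct H; auto.
  exfalso; apply I; eexists; eauto.
Qed.

Lemma eqE_irr_acEq b c : eqE b c -> irr b -> irr c -> acEq b c.
Proof.
  intros He Ib Ic. destruct (vt_confluent HE He) as (u & v & H1 & H2 & H3).
  apply crt_rsm_irr in H1; auto. apply crt_rsm_irr in H2; auto. subst; auto.
Qed.

Lemma good_arg t a : good t -> In a (args_of t) -> good a.
Proof. intros [W I] Ha; split; [eapply wf_arg|eapply irr_arg]; eauto. Qed.

Lemma F2_2 (Rel : term -> term -> Prop) a b c d : Forall2 Rel [a; b] [c; d] -> Rel a c /\ Rel b d.
Proof. intro H; inversion H; subst; inversion H5; subst; auto. Qed.
Lemma F2_1 (Rel : term -> term -> Prop) a c : Forall2 Rel [a] [c] -> Rel a c.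
Proof. intro H; inversion H; subst; auto. Qed.

Lemma eqE_Fn f p l l' : Forall2 eqE l l' -> eqE (Fn f (p ++ l)) (Fn f (p ++ l')).
Proof.
  intro H; revert p; induction H; intro p; [apply rst_refl|].
  eapply rst_trans.
  - apply (eqE_lift (fun z => Fn f (p ++ z :: l))); [intros P0 s u Hc; now apply ctx_fn|exact H].
  - specialize (IHForall2 (p ++ [y])). rewrite <- !app_assoc in IHForall2. exact IHForall2.
Qed.

Variable nfun : term -> term.
Hypothesis Hnf : forall t, is_nf ac R t (nfun t).

Lemma nfgood t : wf t -> good (nfun t).
Proof. intro W; split; [eapply crt_rsm_wf; [apply (Hnf t)|auto]| apply (Hnf t)]. Qed.

Lemma nfeq t : eqE t (nfun t).
Proof. apply crt_rsm_eqE, (Hnf t). Qed.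

Lemma shape t : ~ isFn t -> same_head t (nfun t) /\ Forall2 (crt (ctx Pall)) (args_of t) (args_of (nfun t)).
Proof. intro Hn; apply crt_shape; [exact Pall_fn| |auto]. apply crt_rsm_Pall, (Hnf t). Qed.

Lemma e1 M a : crt (ctx Pall) M a -> eqE (nfun M) a.
Proof. intro H; eapply eqE_trans; [apply eqE_sym, nfeq| now apply crt_Pall_eqE]. Qed.
Lemma e2 M a : crt (ctx Pall) M a -> eqE a (nfun M).
Proof. intro H; apply eqE_sym, e1, H. Qed.

Lemma liftG G Γ X : (forall t, In t G -> Dd Γ (nfun t)) -> Dd Γ X -> forall t, In t G -> Dd (X :: Γ) (nfun t).
Proof.
  intros HD HX t Ht. eapply weak; [apply HD; auto| intros z Hz; simpl; auto|].
  intros x [<-|Hx]; [eapply Dd_goodT; eauto|eapply Dd_good; eauto].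
Qed.

Lemma mcut X : forall G T, (forall x, In x X -> Dd G x) -> Dd (X ++ G) T -> Dd G T.
Proof.
  induction X as [|a X IH]; intros G T H1 H2; simpl in H2; auto.
  apply cutD with a; [apply H1; simpl; auto|].
  apply IH.
  - intros x Hx. eapply weak; [apply H1; simpl; auto| intros z Hz; simpl; auto|].
    intros z [<-|Hz]; [eapply Dd_goodT; apply H1; simpl; auto|eapply Dd_good; [apply (H1 a); simpl; auto|exact Hz]].
  - eapply weak; [exact H2| intros z Hz; simpl in *; rewrite in_app_iff in *; simpl in *; tauto|].
    intros z Hz. apply (Dd_good _ _ H2). simpl; rewrite in_app_iff in *; simpl in *; tauto.
Qed.

Lemma Fall_nf l : Forall2 eqE l (map nfun l).
Proof. induction l; simpl; constructor; auto; apply nfeq. Qed.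

Ltac garg Gu := eapply good_arg; [exact Gu|simpl; auto].
Ltac warg W := eapply wf_arg; [exact W|simpl; auto].

Lemma comp G M : Nd G M -> (forall t, In t G -> wf t) ->
  forall Γ, (forall x, In x Γ -> good x) -> (forall t, In t G -> Dd Γ (nfun t)) -> Dd Γ (nfun M).
Proof.
  intros H HG; induction H; intros Γ HΓ HD.
  - auto.
  -
    assert (W : wf (Enc M K)) by (eapply Nd_wf; eauto).
    destruct (shape (Enc M K) (fun x => x)) as [Sh Fa].
    pose proof (nfgood _ W) as Gu. pose proof (IHNd1 Γ HΓ HD) as D1.
    destruct (nfun (Enc M K)) as [| | | | | |a b|] eqn:Eu; simpl in Sh; try contradiction.
    simpl in Fa; apply F2_2 in Fa as [Fa Fb].
    apply cutD with (Enc a b); auto.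
    assert (HΓ1 : forall x, In x (Enc a b :: Γ) -> good x) by (intros x [<-|Hx]; auto).
    eapply D_eL with (M := a) (K := b).
    + split; [exact HΓ1| apply nfgood; warg W].
    + simpl; auto.
    + eapply convD; [apply (IHNd2 _ HΓ1 (liftG _ _ _ HD D1))| garg Gu | apply e2; auto].
    + apply idD with a; [simpl; auto| |apply nfgood; warg W|apply e1; auto].
      intros x [<-|[<-|Hx]]; [garg Gu|garg Gu|auto].
  -
    assert (W : wf (Enc M K)) by (constructor; eapply Nd_wf; eauto).
    destruct (shape (Enc M K) (fun x => x)) as [Sh Fa].
    pose proof (nfgood _ W) as Gu.
    destruct (nfun (Enc M K)) as [| | | | | |a b|] eqn:Eu; simpl in Sh; try contradiction.
    simpl in Fa; apply F2_2 in Fa as [Fa Fb].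
    apply D_eR; [split; [exact HΓ|exact Gu]| |].
    + eapply convD; [apply (IHNd1 _ HΓ HD)| garg Gu | apply e2; auto].
    + eapply convD; [apply (IHNd2 _ HΓ HD)| garg Gu | apply e2; auto].
  -
    assert (W : wf (Pair M N)) by (eapply Nd_wf; eauto).
    destruct (shape (Pair M N) (fun x => x)) as [Sh Fa].
    pose proof (nfgood _ W) as Gu. pose proof (IHNd Γ HΓ HD) as D1.
    destruct (nfun (Pair M N)) as [| | | | |a b| |] eqn:Eu; simpl in Sh; try contradiction.
    simpl in Fa; apply F2_2 in Fa as [Fa Fb].
    apply cutD with (Pair a b); auto.
    assert (HΓ1 : forall x, In x (Pair a b :: Γ) -> good x) by (intros x [<-|Hx]; auto).
    eapply D_pL with (M := a) (N := b).
    + split; [exact HΓ1| apply nfgood; warg W].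
    + simpl; auto.
    + apply idD with a; [simpl; auto| |apply nfgood; warg W|apply e1; auto].
      intros x [<-|[<-|Hx]]; [garg Gu|garg Gu|auto].
  -
    assert (W : wf (Pair M N)) by (eapply Nd_wf; eauto).
    destruct (shape (Pair M N) (fun x => x)) as [Sh Fa].
    pose proof (nfgood _ W) as Gu. pose proof (IHNd Γ HΓ HD) as D1.
    destruct (nfun (Pair M N)) as [| | | | |a b| |] eqn:Eu; simpl in Sh; try contradiction.
    simpl in Fa; apply F2_2 in Fa as [Fa Fb].
    apply cutD with (Pair a b); auto.
    assert (HΓ1 : forall x, In x (Pair a b :: Γ) -> good x) by (intros x [<-|Hx]; auto).
    eapply D_pL with (M := a) (N := b).
    + split; [exact HΓ1| apply nfgood; warg W].
    + simpl; auto.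
    + apply idD with b; [simpl; auto| |apply nfgood; warg W|apply e1; auto].
      intros x [<-|[<-|Hx]]; [garg Gu|garg Gu|auto].
  -
    assert (W : wf (Pair M N)) by (constructor; eapply Nd_wf; eauto).
    destruct (shape (Pair M N) (fun x => x)) as [Sh Fa].
    pose proof (nfgood _ W) as Gu.
    destruct (nfun (Pair M N)) as [| | | | |a b| |] eqn:Eu; simpl in Sh; try contradiction.
    simpl in Fa; apply F2_2 in Fa as [Fa Fb].
    apply D_pR; [split; [exact HΓ|exact Gu]| |].
    + eapply convD; [apply (IHNd1 _ HΓ HD)| garg Gu | apply e2; auto].
    + eapply convD; [apply (IHNd2 _ HΓ HD)| garg Gu | apply e2; auto].
  -
    assert (W : wf (Sign M K)) by (eapply Nd_wf; eauto).
    assert (W2 : wf (Pub K)) by (eapply Nd_wf; eauto).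
    destruct (shape (Sign M K) (fun x => x)) as [Sh Fa].
    destruct (shape (Pub K) (fun x => x)) as [Sh2 Fc].
    pose proof (nfgood _ W) as Gu. pose proof (nfgood _ W2) as Gv.
    pose proof (IHNd1 Γ HΓ HD) as D1.
    destruct (nfun (Sign M K)) as [| | |a b| | | |] eqn:Eu; simpl in Sh; try contradiction.
    simpl in Fa; apply F2_2 in Fa as [Fa Fb].
    apply cutD with (Sign a b); auto.
    assert (HΓ1 : forall x, In x (Sign a b :: Γ) -> good x) by (intros x [<-|Hx]; auto).
    pose proof (IHNd2 _ HΓ1 (liftG _ _ _ HD D1)) as D2.
    destruct (nfun (Pub K)) as [| |c| | | | |] eqn:Ev; simpl in Sh2; try contradiction.
    simpl in Fc; apply F2_1 in Fc.
    apply cutD with (Pub c); auto.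
    assert (HΓ2 : forall x, In x (Pub c :: Sign a b :: Γ) -> good x) by (intros x [<-|Hx]; auto).
    eapply D_signL with (M := a) (K := b) (L := c).
    + split; [exact HΓ2| apply nfgood; warg W].
    + simpl; auto.
    + simpl; auto.
    + apply eqE_irr_acEq.
      * eapply eqE_trans; [apply eqE_sym, crt_Pall_eqE, Fb| apply crt_Pall_eqE, Fc].
      * assert (good b) as [_ I] by garg Gu; exact I.
      * assert (good c) as [_ I] by garg Gv; exact I.
    + apply idD with a; [simpl; auto| |apply nfgood; warg W|apply e1; auto].
      intros x [<-|Hx]; [garg Gu|auto].
  -
    assert (W : wf (Sign M K)) by (constructor; eapply Nd_wf; eauto).
    destruct (shape (Sign M K) (fun x => x)) as [Sh Fa].
    pose proof (nfgood _ W) as Gu.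
    destruct (nfun (Sign M K)) as [| | |a b| | | |] eqn:Eu; simpl in Sh; try contradiction.
    simpl in Fa; apply F2_2 in Fa as [Fa Fb].
    apply D_signR; [split; [exact HΓ|exact Gu]| |].
    + eapply convD; [apply (IHNd1 _ HΓ HD)| garg Gu | apply e2; auto].
    + eapply convD; [apply (IHNd2 _ HΓ HD)| garg Gu | apply e2; auto].
  -
    assert (W : wf (Blind M K)) by (eapply Nd_wf; eauto).
    destruct (shape (Blind M K) (fun x => x)) as [Sh Fa].
    pose proof (nfgood _ W) as Gu. pose proof (IHNd1 Γ HΓ HD) as D1.
    destruct (nfun (Blind M K)) as [| | | |a b| | |] eqn:Eu; simpl in Sh; try contradiction.
    simpl in Fa; apply F2_2 in Fa as [Fa Fb].
    apply cutD with (Blind a b); auto.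
    assert (HΓ1 : forall x, In x (Blind a b :: Γ) -> good x) by (intros x [<-|Hx]; auto).
    eapply D_blindL1 with (M := a) (K := b).
    + split; [exact HΓ1| apply nfgood; warg W].
    + simpl; auto.
    + eapply convD; [apply (IHNd2 _ HΓ1 (liftG _ _ _ HD D1))| garg Gu | apply e2; auto].
    + apply idD with a; [simpl; auto| |apply nfgood; warg W|apply e1; auto].
      intros x [<-|[<-|Hx]]; [garg Gu|garg Gu|auto].
  -
    assert (W : wf (Blind M K)) by (constructor; eapply Nd_wf; eauto).
    destruct (shape (Blind M K) (fun x => x)) as [Sh Fa].
    pose proof (nfgood _ W) as Gu.
    destruct (nfun (Blind M K)) as [| | | |a b| | |] eqn:Eu; simpl in Sh; try contradiction.
    simpl in Fa; apply F2_2 in Fa as [Fa Fb].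
    apply D_blindR; [split; [exact HΓ|exact Gu]| |].
    + eapply convD; [apply (IHNd1 _ HΓ HD)| garg Gu | apply e2; auto].
    + eapply convD; [apply (IHNd2 _ HΓ HD)| garg Gu | apply e2; auto].
  -
    assert (W : wf (Sign (Blind M Rr) K)) by (eapply Nd_wf; eauto).
    assert (WB : wf (Blind M Rr)) by warg W.
    assert (WM : wf M) by warg WB. assert (WK : wf K) by warg W.
    destruct (shape (Sign (Blind M Rr) K) (fun x => x)) as [Sh Fa].
    pose proof (nfgood _ W) as Gu. pose proof (IHNd1 Γ HΓ HD) as D1.
    destruct (nfun (Sign (Blind M Rr) K)) as [| | |x b| | | |] eqn:Eu; simpl in Sh; try contradiction.
    simpl in Fa; apply F2_2 in Fa as [Fx Fb].
    assert (Gx : good x) by garg Gu. assert (Gb : good b) by garg Gu.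
    destruct (crt_shape Pall Pall_fn _ _ Fx (fun z => z)) as [Sh2 Fa2].
    destruct x as [| | | |a r| | |]; simpl in Sh2; try contradiction.
    simpl in Fa2; apply F2_2 in Fa2 as [Fa Fr].
    assert (Ga : good a) by garg Gx. assert (Gr : good r) by garg Gx.
    apply cutD with (Sign (Blind a r) b); auto.
    assert (HΓ1 : forall z, In z (Sign (Blind a r) b :: Γ) -> good z) by (intros z [<-|Hz]; auto).
    eapply D_blindL2 with (M := a) (Rr := r) (K := b).
    + split; [exact HΓ1| apply nfgood; constructor; auto].
    + simpl; auto.
    + eapply convD; [apply (IHNd2 _ HΓ1 (liftG _ _ _ HD D1))| exact Gr | apply e2; auto].
    + assert (GS : good (Sign a b)).
      { destruct Ga, Gb; split; [constructor; auto| apply irr_sign; auto]. }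
      apply idD with (Sign a b); [simpl; auto| |apply nfgood; constructor; auto|].
      * intros z [<-|[<-|Hz]]; auto.
      * eapply eqE_trans; [apply eqE_sym, nfeq|].
        eapply eqE_trans.
        -- apply (eqE_lift (fun z => Sign z K)); [intros P0 s u Hc; now apply ctx_sign1|apply crt_Pall_eqE, Fa].
        -- apply (eqE_lift (fun z => Sign a z)); [intros P0 s u Hc; now apply ctx_sign2|apply crt_Pall_eqE, Fb].
  -
    assert (W : wf (Fn f l)) by (constructor; auto; intros a Ha; eapply Nd_wf; eauto).
    apply mcut with (X := map nfun l).
    + intros x Hx; apply in_map_iff in Hx as (a & <- & Ha). now apply H1.
    + apply D_id with (i := ti f).
      * split; [|apply nfgood, W]. intros x Hx; apply in_app_or in Hx as [Hx|Hx]; [|apply HΓ; exact Hx].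
        apply in_map_iff in Hx as (a & <- & Ha). apply nfgood; eapply Nd_wf; eauto.
      * exists (Fn f (map nfun l)); split.
        -- apply ci_fn; auto; [rewrite length_map; auto|].
           intros a Ha; apply ci_hole, in_or_app; auto.
        -- eapply eqE_trans; [apply eqE_sym, nfeq|]. exact (eqE_Fn f [] _ _ (Fall_nf l)).
  -
    eapply convD; [apply (IHNd _ HΓ HD)|apply nfgood; auto|].
    eapply eqE_trans; [apply eqE_sym, nfeq|]. eapply eqE_trans; [exact H0|apply nfeq].
Qed.
End S.

Theorem proposition6
  (F : Type) (ar ti : F -> nat) (ac : F -> bool) (R : list (term F * term F))
  (HE : valid_theory ar ti ac R)
  (nfun : term F -> term F) (Hnf : forall t, is_nf ac R t (nfun t))
  (G : list (term F)) (M : term F)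
  (HG : forall t, In t G -> ground t /\ wf ar t) (HM : ground M /\ wf ar M) :
  Nd ar ac R G M <-> Dd ar ti ac R (map nfun G) (nfun M).
Proof.
  assert (HGw : forall t, In t G -> wf ar t) by (intros t Ht; apply HG, Ht).
  assert (HΓ : forall x, In x (map nfun G) -> good F ar ac R x).
  { intros x Hx; apply in_map_iff in Hx as (t & <- & Ht). apply (nfgood F ar ti ac R HE nfun Hnf), HGw, Ht. }
  split.
  - intro H. eapply (comp F ar ti ac R HE nfun Hnf); eauto.
    intros t Ht. apply (idD F ar ti ac R) with (nfun t); auto.
    + apply in_map; auto.
    + apply (nfgood F ar ti ac R HE nfun Hnf), HGw, Ht.
    + apply rst_refl.
  - intro H. apply (sound F ar ti ac R) with (G0 := G) in H.
    + eapply N_approx; [exact H| apply (nfeq F ac R nfun Hnf)| apply HM].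
    + intros x Hx; apply in_map_iff in Hx as (t & <- & Ht).
      eapply N_approx; [apply N_id; exact Ht| apply (eqE_sym F ac R), (nfeq F ac R nfun Hnf)|].
      apply (crt_rsm_wf F ar ti ac R HE t); [apply (Hnf t)| apply HGw, Ht].
Qed.
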